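(* Let $d\in\{-1,-2,-3,-7,-11,-19,-43,-67,-163\}$ and let $R$ be the ring of algebraic integers of the imaginary quadratic number field $\mathbb{Q}[\sqrt d]$. If $A$ is a nonzero ideal of $R$, then there is a nonzero element $m\in R$ such that $P_A=\tau_m$. Moreover, there is a positive ordinary integer $n$ such that $P_{A\overline A}=\tau_n$, where $\overline A=\{\overline a: a\in A\}$ is the complex conjugate of $A$ and $A\overline A$ is the product ideal.
   Context: Here $P_H$ for a subset $H\subseteq R$ is the principal congruence on the multiplicative semigroup $R_{mult}$ of $R$: for $a\in R$, $H\dots a=\{(x,y)\in R\times R: xay\in H\}$ and $P_H=\{(a,b): H\dots a=H\dots b\}$. For $m\in R$, $\tau_m$ is the relation on $R$ given by $(a,b)\in\tau_m$ iff $\gcd(a,m)$ and $\gcd(b,m)$ are associates in $R$ (for these $d$, $R$ is a unique factorization domain, so gcds exist). *)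

(* Defs.v *)
From mathcomp Require Import all_boot all_order all_algebra all_field.
Set Implicit Arguments. Unset Strict Implicit. Unset Printing Implicit Defensive.
Import Order.TTheory GRing.Theory Num.Theory.
Local Open Scope ring_scope.

Definition inR (d : int) (z : algC) : Prop :=
  z \in Aint /\ exists p q : rat, z = ratr p + ratr q * sqrtC (d%:~R).

Definition is_ideal (d : int) (A : algC -> Prop) : Prop :=
  [/\ (forall z, A z -> inR d z),
      A 0,
      (forall x y, A x -> A y -> A (x + y)),
      (forall x, A x -> A (- x)) &
      (forall r x, inR d r -> A x -> A (r * x))].

Definition nonzero_set (A : algC -> Prop) : Prop := exists a, A a /\ a <> 0.

Definition conj_set (A : algC -> Prop) : algC -> Prop := fun z => A (z^*).

Definition prod_set (A B : algC -> Prop) : algC -> Prop := fun z =>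
  exists s : seq (algC * algC),
    (forall p, p \in s -> A p.1 /\ B p.2) /\
    z = \sum_(p <- s) p.1 * p.2.

(* P_H on R: (a,b) in P_H iff H..a = H..b, where
   H..a = {(x,y) in R x R : x a y in H}. *)
Definition P_rel (d : int) (H : algC -> Prop) (a b : algC) : Prop :=
  forall x y, inR d x -> inR d y -> (H (x * a * y) <-> H (x * b * y)).

Definition dvdR (d : int) (u v : algC) : Prop := exists w, inR d w /\ v = u * w.

Definition is_gcdR (d : int) (g a b : algC) : Prop :=
  [/\ inR d g, dvdR d g a, dvdR d g b &
      forall c, inR d c -> dvdR d c a -> dvdR d c b -> dvdR d c g].

Definition assocR (d : int) (u v : algC) : Prop := dvdR d u v /\ dvdR d v u.

Definition tau_rel (d : int) (m a b : algC) : Prop :=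
  exists g1 g2, [/\ is_gcdR d g1 a m, is_gcdR d g2 b m & assocR d g1 g2].

Definition heegner_d : seq int := [:: -1; -2; -3; -7; -11; -19; -43; -67; -163].

(* Main.v *)
Require Import Defs.
From mathcomp Require Import all_boot all_order all_algebra all_field.
From mathcomp Require Import zify ring lra.
From Stdlib Require Import Classical.
Import Order.TTheory GRing.Theory Num.Theory.
Local Open Scope ring_scope.
Set Warnings "-notation-overridden,-ambiguous-paths".
Definition QF (t0 k x y : int) := x*x + t0*x*y + k*y*y.
Definition idv (a b : int) := exists q, b = a * q.

Lemma idvP (a b : int) : idv a b <-> (a %| b)%Z.
Proof.
split=> [[q ->]|/dvdzP [q ->]]; first by rewrite dvdz_mulr.
by exists q; rewrite mulrC.
Qed.

Lemma prime_bezout (p : nat) (m : int) : prime p -> ~ idv p%:Z m ->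
  exists u v : int, u * m + v * p%:Z = 1.
Proof.
move=> pp nd.
have : coprimez m p%:Z.
  rewrite coprimezE /= coprime_sym prime_coprime //.
  apply/negP => h; apply: nd; apply/idvP; exact: h.
by case/coprimezP=> [[u v] /= h]; exists u, v.
Qed.

Lemma prime_euclid (p : nat) (x : int) : prime p -> idv p%:Z (x * x) -> idv p%:Z x.
Proof.
move=> pp /idvP h; apply/idvP; move: h.
rewrite !dvdzE abszM Euclid_dvdM //. by case/orP.
Qed.


Lemma prime_DH (t0 k : int) (ht : t0 = 0 \/ t0 = 1) (hk : 1 <= k)
  (hsmall : forall p e q : int, 2 <= p -> 0 <= e -> e < p ->
     e * e + t0 * e + k = p * q -> 4 * k < 3 * p * p)
  (p : nat) (x y : int) : prime p -> ~ (idv p%:Z x /\ idv p%:Z y) ->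
  exists s1 s2 t1 t2 : int,
    0 < QF t0 k (s1 * x - k * s2 * y - p%:Z * t1) (s1 * y + s2 * x + t0 * s2 * y - p%:Z * t2)
    /\ QF t0 k (s1 * x - k * s2 * y - p%:Z * t1) (s1 * y + s2 * x + t0 * s2 * y - p%:Z * t2)
       < p%:Z * p%:Z.
Proof.
move=> pp nxy.
have p2 : 2 <= p%:Z by have := prime_gt1 pp; lia.
set P := p%:Z in p2 nxy *.
case: (classic (idv P (QF t0 k x y))) => hQ; last first.
  have [u [v huv]] := @prime_bezout p _ pp hQ.
  exists (u * (x + t0 * y)), (-(u * y)), (-v), 0.
  have -> : u * (x + t0 * y) * x - k * - (u * y) * y - P * - v = 1.
    by rewrite -huv /QF /P; ring.
  have -> : u * (x + t0 * y) * y + - (u * y) * x + t0 * - (u * y) * y - P * 0 = 0.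
    by ring.
  rewrite /QF; clear -p2 hk ht; split; nia.
have ny : ~ idv P y.
  move=> [q hy]; apply: nxy; split; last by exists q.
  apply: (@prime_euclid p) => //; case: hQ => q0 hq0.
  exists (q0 - t0 * x * q - k * q * y).
  move: hq0; rewrite /QF hy => hq0.
  have -> : x * x = x * x + t0 * x * (P * q) + k * (P * q) * (P * q) - t0 * x * (P * q) - k * (P * q) * (P * q) by ring.
  rewrite hq0; ring.
have [u [v huv]] := @prime_bezout p _ pp ny.
case: hQ => q0 hq0.
have P0 : P != 0 by apply/eqP; lia.
set e0 := ((u * x) %% P)%Z.
set A := ((u * x) %/ P)%Z.
have he0 : u * x = A * P + e0 by rewrite /A /e0 -divz_eq.
have e0ge : 0 <= e0 by rewrite /e0 modz_ge0.
have e0lt : e0 < P by rewrite /e0 ltz_pmod //; lia.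
have hdiv : e0 * e0 + t0 * e0 + k =
   P * (u * u * q0 - 2 * (u * x) * A + t0 * ((u * x) * v - A * (u * y)) + 2 * k * (u * y) * v
        + P * (A * A - t0 * A * v + k * v * v)).
  have -> : e0 * e0 + t0 * e0 + k = e0 * e0 + t0 * e0 * (u * y + v * P) + k * (u * y + v * P) * (u * y + v * P).
    by rewrite huv; ring.
  have -> : e0 = u * x - A * P by rewrite he0; ring.
  apply/eqP; rewrite -subr_eq0; apply/eqP.
  transitivity (u * u * (QF t0 k x y - P * q0)); first by rewrite /QF; ring.
  by rewrite -hq0 subrr mulr0.
have hbig := hsmall P e0 _ p2 e0ge e0lt hdiv.
have t01 : 0 <= t0 <= 1 by case: ht => ->.
case: (lerP (2 * e0 + 1) P) => he.
  exists u, 0, A, (-v).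
  have -> : u * x - k * 0 * y - P * A = e0 by rewrite he0; ring.
  have -> : u * y + 0 * x + t0 * 0 * y - P * - v = 1 by rewrite -huv; ring.
  have h2 : (2 * e0 + 1) * (2 * e0 + 1) <= P * P by apply: ler_pM; lia.
  rewrite /QF; clear -h2 hbig t01 e0ge hk; split; nia.
exists u, 0, (A + 1), (-v).
have -> : u * x - k * 0 * y - P * (A + 1) = e0 - P by rewrite he0; ring.
have -> : u * y + 0 * x + t0 * 0 * y - P * - v = 1 by rewrite -huv; ring.
have h2 : (2 * (P - e0)) * (2 * (P - e0)) <= P * P by apply: ler_pM; lia.
rewrite /QF; clear -h2 hbig t01 e0ge e0lt hk he; split; nia.
Qed.
Lemma QF_scale t0 k a X Y : QF t0 k (a * X) (a * Y) = a * a * QF t0 k X Y.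
Proof. rewrite /QF; ring. Qed.

Lemma DH_int (t0 k : int) (ht : t0 = 0 \/ t0 = 1) (hk : 1 <= k)
  (hsmall : forall p e q : int, 2 <= p -> 0 <= e -> e < p ->
     e * e + t0 * e + k = p * q -> 4 * k < 3 * p * p)
  (c : nat) (x y : int) : (0 < c)%N -> ~ (idv c%:Z x /\ idv c%:Z y) ->
  exists s1 s2 t1 t2 : int,
    0 < QF t0 k (s1 * x - k * s2 * y - c%:Z * t1) (s1 * y + s2 * x + t0 * s2 * y - c%:Z * t2)
    /\ QF t0 k (s1 * x - k * s2 * y - c%:Z * t1) (s1 * y + s2 * x + t0 * s2 * y - c%:Z * t2)
       < c%:Z * c%:Z.
Proof.
elim: c {-2}c (leqnn c) x y => [|n IH] c hc x y c0 nd; first by move: hc c0 nd; case: c.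
have c1 : (1 < c)%N.
  case: c hc c0 nd => [|[|c]] // _ _ nd; exfalso; apply: nd.
  by split; [exists x | exists y]; rewrite mul1r.
have pp := pdiv_prime c1.
set p := pdiv c in pp.
have hpc : c = (p * (c %/ p))%N by rewrite mulnC divnK // /p pdiv_dvd.
set c' := (c %/ p)%N in hpc.
have p2 := prime_gt1 pp.
have c'pos : (0 < c')%N by move: c0; rewrite hpc muln_gt0 => /andP[].
have hcz : c%:Z = p%:Z * c'%:Z by rewrite hpc PoszM.
case: (classic (idv p%:Z x /\ idv p%:Z y)) => [[[x1 hx1] [y1 hy1]]|npxy].
  have c'lt : (c' <= n)%N.
    have : (c' < c)%N by rewrite /c' ltn_Pdiv // ltnW.
    by move=> h; lia.
  have nd' : ~ (idv c'%:Z x1 /\ idv c'%:Z y1).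
    move=> [[a ha] [b hb]]; apply: nd; split.
      by exists a; rewrite hx1 ha hcz mulrA.
    by exists b; rewrite hy1 hb hcz mulrA.
  have [s1 [s2 [t1 [t2 [h1 h2]]]]] := IH c' c'lt x1 y1 c'pos nd'.
  exists s1, s2, t1, t2.
  have -> : s1 * x - k * s2 * y - c%:Z * t1 = p%:Z * (s1 * x1 - k * s2 * y1 - c'%:Z * t1).
    by rewrite hx1 hy1 hcz; ring.
  have -> : s1 * y + s2 * x + t0 * s2 * y - c%:Z * t2 = p%:Z * (s1 * y1 + s2 * x1 + t0 * s2 * y1 - c'%:Z * t2).
    by rewrite hx1 hy1 hcz; ring.
  rewrite QF_scale hcz.
  have pz : 2 <= p%:Z by lia.
  move: h1 h2; set q := QF _ _ _ _ => h1 h2.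
  clear -pz h1 h2; split; nia.
have [s1 [s2 [t1 [t2 [h1 h2]]]]] := @prime_DH t0 k ht hk hsmall p x y pp npxy.
exists (c'%:Z * s1), (c'%:Z * s2), t1, t2.
have -> : c'%:Z * s1 * x - k * (c'%:Z * s2) * y - c%:Z * t1 = c'%:Z * (s1 * x - k * s2 * y - p%:Z * t1).
  by rewrite hcz; ring.
have -> : c'%:Z * s1 * y + c'%:Z * s2 * x + t0 * (c'%:Z * s2) * y - c%:Z * t2 = c'%:Z * (s1 * y + s2 * x + t0 * s2 * y - p%:Z * t2).
  by rewrite hcz; ring.
rewrite QF_scale hcz.
have cz : 1 <= c'%:Z by lia.
move: h1 h2; set q := QF _ _ _ _ => h1 h2.
clear -cz h1 h2; split; nia.
Qed.
Definition sq (d : int) : algC := sqrtC d%:~R.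
Definition om (d t0 : int) : algC := if t0 == 0 then sq d else (1 + sq d) / 2.
Definition emb (d t0 x y : int) : algC := x%:~R + y%:~R * om d t0.

Lemma sq_sq d : sq d * sq d = d%:~R.
Proof. by rewrite -expr2 sqrtCK. Qed.

Lemma sq_conj d : d < 0 -> (sq d)^* = - sq d.
Proof.
move=> dlt.
have s0 : sq d != 0 by rewrite /sq sqrtC_eq0 intr_eq0; apply/eqP; lia.
have h : sq d * (sq d)^* = - (sq d * sq d).
  rewrite -normCK -normrX expr2 sq_sq ltr0_norm ?ltrz0 ?sq_sq //.
have : sq d * ((sq d)^* + sq d) == 0 by rewrite mulrDr h addNr.
by rewrite mulf_eq0 (negPf s0) /= addr_eq0 => /eqP.
Qed.

Lemma conj_intr' (x : int) : (x%:~R : algC)^* = x%:~R.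
Proof. exact: rmorph_int. Qed.

Section Om.
Variables (d t0 k : int).
Hypothesis hrel : (t0 = 0 /\ d = - k) \/ (t0 = 1 /\ d = 1 - 4 * k).
Hypothesis dneg : d < 0.

Lemma om_sq : om d t0 * om d t0 = t0%:~R * om d t0 - k%:~R.
Proof.
rewrite /om; case: hrel => [[-> ->]|[-> ->]] /=.
  by rewrite sq_sq mul0r sub0r rmorphN.
have h := sq_sq (1 - 4 * k); move: h; set s := sq _ => h.
have h' : s * s = 1 - 4 * k%:~R by rewrite h rmorphB rmorphM /= rmorph1.
rewrite rmorph1 mul1r.
have -> : ((1 + s) / 2) * ((1 + s) / 2) = (1 + 2 * s + s * s) / 4 by field.
by rewrite h'; field.
Qed.

Lemma om_conj : (om d t0)^* = t0%:~R - om d t0.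
Proof.
rewrite /om; case: hrel => [[-> hd]|[-> hd]] /=.
  by rewrite sq_conj // mulr0z sub0r.
rewrite !(rmorphM, fmorphV, rmorphD) /= sq_conj // rmorph1 mulr1z.
by field.
Qed.

Lemma emb_mul a1 a2 b1 b2 : emb d t0 a1 a2 * emb d t0 b1 b2 =
  emb d t0 (a1 * b1 - k * a2 * b2) (a1 * b2 + a2 * b1 + t0 * a2 * b2).
Proof.
rewrite /emb; have hw := om_sq; move: hw; set w := om d t0 => hw.
rewrite !(rmorphD, rmorphN, rmorphM) /=.
transitivity (a1%:~R * b1%:~R + (a1%:~R * b2%:~R + a2%:~R * b1%:~R) * w + a2%:~R * b2%:~R * (w * w) : algC).
  by ring.
by rewrite hw; ring.
Qed.

Lemma emb_conj x y : (emb d t0 x y)^* = emb d t0 (x + t0 * y) (- y).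
Proof.
rewrite /emb rmorphD rmorphM /= !conj_intr' om_conj //.
rewrite rmorphD rmorphM rmorphN /=; ring.
Qed.

Lemma emb_add a1 a2 b1 b2 : emb d t0 a1 a2 + emb d t0 b1 b2 = emb d t0 (a1 + b1) (a2 + b2).
Proof. by rewrite /emb !rmorphD /=; ring. Qed.

Lemma emb_opp a1 a2 : - emb d t0 a1 a2 = emb d t0 (- a1) (- a2).
Proof. by rewrite /emb !rmorphN /=; ring. Qed.

Lemma emb_int x : emb d t0 x 0 = x%:~R.
Proof. by rewrite /emb mulr0z mul0r addr0. Qed.

Lemma emb_norm x y : emb d t0 x y * (emb d t0 x y)^* = (QF t0 k x y)%:~R.
Proof.
rewrite emb_conj emb_mul -emb_int; congr emb; rewrite /QF; ring.
Qed.
End Om.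
Lemma quad_id (R : comNzRingType) (X a b : R) :
  (X - a) * (X - b) = X ^+ 2 - (a + b) * X + a * b.
Proof. ring. Qed.

Lemma root_quad_Aint (w w' : algC) (t0 k : int) :
  w + w' = t0%:~R -> w * w' = k%:~R -> w \in Aint.
Proof.
move=> hs hp.
apply: (@root_monic_Aint (('X - w%:P) * ('X - w'%:P))).
- by rewrite rootM root_XsubC eqxx.
- by rewrite monicMl monicXsubC.
have -> : ('X - w%:P) * ('X - w'%:P) = 'X^2 - (t0%:~R : algC) *: 'X + (k%:~R : algC)%:P.
  by rewrite -hs -hp -mul_polyC !(rmorphD, rmorphM) /= quad_id.
apply/polyOverP => i.
rewrite coefD coefB coefXn coefZ coefX coefC.
apply/intrP; case: i => [|[|[|i]]] /=; [exists k | exists (- t0) | exists 1 | exists 0]; rewrite ?rmorphN ?rmorph1 /=; ring.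
Qed.

Lemma Aint_conj z : z \in Aint -> z^* \in Aint.
Proof. by rewrite (Aint_aut Num.conj). Qed.

Lemma Aint_Crat_int z : z \in Aint -> z \in Crat -> exists n : int, z = n%:~R.
Proof. by move=> h1 h2; apply/intrP; exact: Cint_rat_Aint. Qed.

Definition good (d t0 k : int) :=
 [/\ (t0 = 0 /\ d = - k) \/ (t0 = 1 /\ d = 1 - 4 * k), 1 <= k, d < 0 &
   [/\
   (forall p e q : int, 2 <= p -> 0 <= e -> e < p ->
       e * e + t0 * e + k = p * q -> 4 * k < 3 * p * p),
   (forall u M : int, u * u = M * d -> exists b, u = b * d) &
   (forall a b n : int, a * a - d * b * b = 4 * n ->
      if t0 == 0 then (exists x y, a = 2 * x /\ b = 2 * y) else exists x, a - b = 2 * x)]].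

Definition Rc (d t0 : int) (z : algC) := exists x y : int, z = emb d t0 x y.

Section Char.
Variables (d t0 k : int).
Hypothesis hg : good d t0 k.

Lemma hrel : (t0 = 0 /\ d = - k) \/ (t0 = 1 /\ d = 1 - 4 * k).
Proof. by case: hg. Qed.
Lemma dneg : d < 0.
Proof. by case: hg. Qed.

Lemma om_Aint : om d t0 \in Aint.
Proof.
apply: (@root_quad_Aint _ (om d t0)^* t0 k).
  by rewrite (@om_conj d t0 k hrel dneg); ring.
rewrite (@om_conj d t0 k hrel dneg) mulrBr (@om_sq d t0 k hrel); ring.
Qed.

Lemma Rc_inR z : Rc d t0 z -> inR d z.
Proof.
move=> [x [y ->]]; split.
  by rewrite /emb rpredD ?rpredM ?Aint_int ?om_Aint.
rewrite /emb /om; case: hrel => [[-> _]|[-> _]] /=.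
  by exists x%:~R, y%:~R; rewrite !rmorph_int.
exists (x%:~R + y%:~R / 2), (y%:~R / 2).
rewrite rmorphD !fmorph_div !rmorph_int !rmorph_nat /= -/(sq d).
by field.
Qed.

Lemma inR_Rc z : inR d z -> Rc d t0 z.
Proof.
case: hg => _ _ dlt [_ hsq hpar].
move=> [zA [p [q hz]]].
move: (Crat_rat p) (Crat_rat q) hz; move: (ratr p) (ratr q) => P Q cP cQ hz.
have Pc : P^* = P by rewrite conj_Crat.
have Qc : Q^* = Q by rewrite conj_Crat.
have sc : (sq d)^* = - sq d by rewrite sq_conj.
have ss : sq d * sq d = d%:~R by rewrite sq_sq.
rewrite -/(sq d) in hz.
remember (sq d) as s eqn:hsd.
have zc : z^* = P - Q * s by rewrite hz rmorphD rmorphM /= Pc Qc sc; ring.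
have zcA : z^* \in Aint by rewrite Aint_conj.
have sA : s \in Aint.
  apply: (@root_quad_Aint _ (- s) 0 (- d)); first by rewrite subrr.
  by rewrite mulrN ss rmorphN.
have [a0 ha0] : exists a0 : int, z + z^* = a0%:~R.
  apply: Aint_Crat_int; first by rewrite rpredD.
  have -> : z + z^* = 2 * P by rewrite zc hz; ring.
  by rewrite rpredM ?rpred_nat.
have [n0 hn0] : exists n0 : int, z * z^* = n0%:~R.
  apply: Aint_Crat_int; first by rewrite rpredM.
  have -> : z * z^* = P * P - Q * Q * d%:~R by rewrite zc hz -ss; ring.
  by rewrite rpredB ?rpredM ?rpred_int.
have [u0 hu0] : exists u0 : int, (z - z^*) * s = u0%:~R.
  apply: Aint_Crat_int; first by rewrite rpredM ?rpredB.
  have -> : (z - z^*) * s = 2 * Q * d%:~R by rewrite zc hz -ss; ring.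
  by rewrite !rpredM ?rpred_nat ?rpred_int.
have e1 : u0 * u0 = (a0 * a0 - 4 * n0) * d.
  apply: (@intr_inj algC); rewrite !(rmorphM, rmorphB) /= -ha0 -hn0 -hu0 zc hz.
  rewrite -ss; ring.
have [b0 hb0] := hsq _ _ e1.
have d0 : (d%:~R : algC) != 0 by rewrite intr_eq0; apply/eqP; lia.
have hQ : 2 * Q = b0%:~R.
  apply: (mulIf d0).
  have hub : (u0%:~R : algC) = b0%:~R * d%:~R by rewrite hb0 rmorphM.
  rewrite -hub -hu0 zc hz -ss; ring.
have e2 : a0 * a0 - d * b0 * b0 = 4 * n0.
  apply: (@intr_inj algC); rewrite !(rmorphM, rmorphB) /= -ha0 -hn0 -hQ zc hz -ss.
  ring.
have hP : 2 * P = a0%:~R by rewrite -ha0 zc hz; ring.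
have := hpar _ _ _ e2.
rewrite /Rc /emb /om; case: hrel => [[-> _]|[-> _]] /=.
  move=> [x [y [hx hy]]]; exists x, y.
  rewrite hz -hsd.
  have -> : P = x%:~R.
    apply: (@mulfI _ 2); first by rewrite pnatr_eq0.
    by rewrite hP hx rmorphM.
  have -> : Q = y%:~R.
    apply: (@mulfI _ 2); first by rewrite pnatr_eq0.
    by rewrite hQ hy rmorphM.
  by [].
move=> [x hx]; exists x, b0.
have hx' : (a0%:~R : algC) = 2 * x%:~R + b0%:~R.
  have hx2 : a0 = 2 * x + b0 by lia.
  rewrite hx2 rmorphD rmorphM /=; ring.
rewrite hz -hsd.
have -> : P = a0%:~R / 2 by rewrite -hP; field.
have -> : Q = b0%:~R / 2 by rewrite -hQ; field.
by rewrite hx'; field.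
Qed.

Lemma inR_iff z : inR d z <-> Rc d t0 z.
Proof. split; [exact: inR_Rc | exact: Rc_inR]. Qed.
End Char.
Lemma par_split (a : int) : exists a' r : int, a = 2 * a' + r /\ (r = 0 \/ r = 1).
Proof.
exists (divz a 2), (modz a 2); split; first by rewrite [X in X = _](divz_eq a 2); ring.
have h1 : 0 <= modz a 2 by rewrite modz_ge0.
have h2 : modz a 2 < 2 by rewrite ltz_pmod.
lia.
Qed.

Lemma par1 (k a b n : int) : a * a - (1 - 4 * k) * b * b = 4 * n -> exists x, a - b = 2 * x.
Proof.
have [a' [ra [-> hra]]] := par_split a.
have [b' [rb [-> hrb]]] := par_split b.
case: hra => ->; case: hrb => -> h.
- by exists (a' - b'); ring.
- exfalso; nia.
- exfalso; nia.
- by exists (a' - b'); ring.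
Qed.

Lemma par_m1 (a b n : int) : a * a - (-1) * b * b = 4 * n -> exists x y, a = 2 * x /\ b = 2 * y.
Proof.
have [a' [ra [-> hra]]] := par_split a.
have [b' [rb [-> hrb]]] := par_split b.
case: hra => ->; case: hrb => -> h.
- by exists a', b'; split; ring.
- exfalso; nia.
- exfalso; nia.
- exfalso; nia.
Qed.

Lemma par_m2 (a b n : int) : a * a - (-2) * b * b = 4 * n -> exists x y, a = 2 * x /\ b = 2 * y.
Proof.
have [a' [ra [-> hra]]] := par_split a.
have [b' [rb [-> hrb]]] := par_split b.
case: hra => ->; case: hrb => -> h.
- by exists a', b'; split; ring.
- exfalso; nia.
- exfalso; nia.
- exfalso; nia.
Qed.

Lemma hsq_m1 (u M : int) : u * u = M * (-1) -> exists b, u = b * (-1).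
Proof. by move=> _; exists (- u); ring. Qed.


Lemma small_1_41 : forall p e q : int, 2 <= p -> 0 <= e -> e < p ->
       e * e + 1 * e + 41 = p * q -> 4 * 41 < 3 * p * p.
Proof.
move=> p e q hp he0 hep heq.
case: (ltrP (4 * 41) (3 * p * p)) => // hle; exfalso.
have hp7 : p <= 7 by nia.
have : p = 2 \/ p = 3 \/ p = 4 \/ p = 5 \/ p = 6 \/ p = 7 by lia.
have : e = 0 \/ e = 1 \/ e = 2 \/ e = 3 \/ e = 4 \/ e = 5 \/ e = 6 by lia.
by (case=> [?|[?|[?|[?|[?|[?|?]]]]]]); subst e;
  (case=> [?|[?|[?|[?|[?|?]]]]]); subst p; lia.
Qed.

Lemma small_1_17 : forall p e q : int, 2 <= p -> 0 <= e -> e < p ->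
       e * e + 1 * e + 17 = p * q -> 4 * 17 < 3 * p * p.
Proof.
move=> p e q hp he0 hep heq.
case: (ltrP (4 * 17) (3 * p * p)) => // hle; exfalso.
have hp7 : p <= 7 by nia.
have : p = 2 \/ p = 3 \/ p = 4 \/ p = 5 \/ p = 6 \/ p = 7 by lia.
have : e = 0 \/ e = 1 \/ e = 2 \/ e = 3 \/ e = 4 \/ e = 5 \/ e = 6 by lia.
by (case=> [?|[?|[?|[?|[?|[?|?]]]]]]); subst e;
  (case=> [?|[?|[?|[?|[?|?]]]]]); subst p; lia.
Qed.

Lemma small_1_11 : forall p e q : int, 2 <= p -> 0 <= e -> e < p ->
       e * e + 1 * e + 11 = p * q -> 4 * 11 < 3 * p * p.
Proof.
move=> p e q hp he0 hep heq.
case: (ltrP (4 * 11) (3 * p * p)) => // hle; exfalso.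
have hp7 : p <= 7 by nia.
have : p = 2 \/ p = 3 \/ p = 4 \/ p = 5 \/ p = 6 \/ p = 7 by lia.
have : e = 0 \/ e = 1 \/ e = 2 \/ e = 3 \/ e = 4 \/ e = 5 \/ e = 6 by lia.
by (case=> [?|[?|[?|[?|[?|[?|?]]]]]]); subst e;
  (case=> [?|[?|[?|[?|[?|?]]]]]); subst p; lia.
Qed.

Lemma small_1_5 : forall p e q : int, 2 <= p -> 0 <= e -> e < p ->
       e * e + 1 * e + 5 = p * q -> 4 * 5 < 3 * p * p.
Proof.
move=> p e q hp he0 hep heq.
case: (ltrP (4 * 5) (3 * p * p)) => // hle; exfalso.
have hp7 : p <= 7 by nia.
have : p = 2 \/ p = 3 \/ p = 4 \/ p = 5 \/ p = 6 \/ p = 7 by lia.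
have : e = 0 \/ e = 1 \/ e = 2 \/ e = 3 \/ e = 4 \/ e = 5 \/ e = 6 by lia.
by (case=> [?|[?|[?|[?|[?|[?|?]]]]]]); subst e;
  (case=> [?|[?|[?|[?|[?|?]]]]]); subst p; lia.
Qed.

Lemma small_1_3 : forall p e q : int, 2 <= p -> 0 <= e -> e < p ->
       e * e + 1 * e + 3 = p * q -> 4 * 3 < 3 * p * p.
Proof.
move=> p e q hp he0 hep heq.
case: (ltrP (4 * 3) (3 * p * p)) => // hle; exfalso.
have hp7 : p <= 7 by nia.
have : p = 2 \/ p = 3 \/ p = 4 \/ p = 5 \/ p = 6 \/ p = 7 by lia.
have : e = 0 \/ e = 1 \/ e = 2 \/ e = 3 \/ e = 4 \/ e = 5 \/ e = 6 by lia.
by (case=> [?|[?|[?|[?|[?|[?|?]]]]]]); subst e;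
  (case=> [?|[?|[?|[?|[?|?]]]]]); subst p; lia.
Qed.

Lemma small_1_2 : forall p e q : int, 2 <= p -> 0 <= e -> e < p ->
       e * e + 1 * e + 2 = p * q -> 4 * 2 < 3 * p * p.
Proof.
move=> p e q hp he0 hep heq.
case: (ltrP (4 * 2) (3 * p * p)) => // hle; exfalso.
have hp7 : p <= 7 by nia.
have : p = 2 \/ p = 3 \/ p = 4 \/ p = 5 \/ p = 6 \/ p = 7 by lia.
have : e = 0 \/ e = 1 \/ e = 2 \/ e = 3 \/ e = 4 \/ e = 5 \/ e = 6 by lia.
by (case=> [?|[?|[?|[?|[?|[?|?]]]]]]); subst e;
  (case=> [?|[?|[?|[?|[?|?]]]]]); subst p; lia.
Qed.

Lemma small_1_1 : forall p e q : int, 2 <= p -> 0 <= e -> e < p ->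
       e * e + 1 * e + 1 = p * q -> 4 * 1 < 3 * p * p.
Proof.
move=> p e q hp he0 hep heq.
case: (ltrP (4 * 1) (3 * p * p)) => // hle; exfalso.
have hp7 : p <= 7 by nia.
have : p = 2 \/ p = 3 \/ p = 4 \/ p = 5 \/ p = 6 \/ p = 7 by lia.
have : e = 0 \/ e = 1 \/ e = 2 \/ e = 3 \/ e = 4 \/ e = 5 \/ e = 6 by lia.
by (case=> [?|[?|[?|[?|[?|[?|?]]]]]]); subst e;
  (case=> [?|[?|[?|[?|[?|?]]]]]); subst p; lia.
Qed.

Lemma small_0_1 : forall p e q : int, 2 <= p -> 0 <= e -> e < p ->
       e * e + 0 * e + 1 = p * q -> 4 * 1 < 3 * p * p.
Proof.
move=> p e q hp he0 hep heq.
case: (ltrP (4 * 1) (3 * p * p)) => // hle; exfalso.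
have hp7 : p <= 7 by nia.
have : p = 2 \/ p = 3 \/ p = 4 \/ p = 5 \/ p = 6 \/ p = 7 by lia.
have : e = 0 \/ e = 1 \/ e = 2 \/ e = 3 \/ e = 4 \/ e = 5 \/ e = 6 by lia.
by (case=> [?|[?|[?|[?|[?|[?|?]]]]]]); subst e;
  (case=> [?|[?|[?|[?|[?|?]]]]]); subst p; lia.
Qed.

Lemma small_0_2 : forall p e q : int, 2 <= p -> 0 <= e -> e < p ->
       e * e + 0 * e + 2 = p * q -> 4 * 2 < 3 * p * p.
Proof.
move=> p e q hp he0 hep heq.
case: (ltrP (4 * 2) (3 * p * p)) => // hle; exfalso.
have hp7 : p <= 7 by nia.
have : p = 2 \/ p = 3 \/ p = 4 \/ p = 5 \/ p = 6 \/ p = 7 by lia.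
have : e = 0 \/ e = 1 \/ e = 2 \/ e = 3 \/ e = 4 \/ e = 5 \/ e = 6 by lia.
by (case=> [?|[?|[?|[?|[?|[?|?]]]]]]); subst e;
  (case=> [?|[?|[?|[?|[?|?]]]]]); subst p; lia.
Qed.

Lemma hsq_prime (q : nat) : prime q ->
  forall u M : int, u * u = M * (- q%:Z) -> exists b, u = b * (- q%:Z).
Proof.
move=> pq u M h.
have : idv q%:Z (u * u) by exists (- M); rewrite h; ring.
move/(@prime_euclid q u pq) => [r hr]; exists (- r); rewrite hr; ring.
Qed.

Lemma good_heegner d : d \in heegner_d -> exists t0 k, good d t0 k.
Proof.
rewrite !inE.
case/orP=> [/eqP ->|].
  exists 0, 1; split; [left; split; lia | lia | lia | split].
  - exact: small_0_1.
  - move=> u M h; exists (- u); ring.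
  - move=> a b n h /=; apply: (@par_m1 a b n); rewrite -h; lia.
case/orP=> [/eqP ->|].
  exists 0, 2; split; [left; split; lia | lia | lia | split].
  - exact: small_0_2.
  - move=> u M h; have := (@hsq_prime 2 isT u M); apply; rewrite h; lia.
  - move=> a b n h /=; apply: (@par_m2 a b n); rewrite -h; lia.
case/orP=> [/eqP ->|].
  exists 1, 1; split; [right; split; lia | lia | lia | split].
  - exact: small_1_1.
  - move=> u M h; have := (@hsq_prime 3 isT u M); apply; rewrite h; lia.
  - move=> a b n h /=; apply: (@par1 1 a b n); rewrite -h; lia.
case/orP=> [/eqP ->|].
  exists 1, 2; split; [right; split; lia | lia | lia | split].
  - exact: small_1_2.
  - move=> u M h; have := (@hsq_prime 7 isT u M); apply; rewrite h; lia.
  - move=> a b n h /=; apply: (@par1 2 a b n); rewrite -h; lia.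
case/orP=> [/eqP ->|].
  exists 1, 3; split; [right; split; lia | lia | lia | split].
  - exact: small_1_3.
  - move=> u M h; have := (@hsq_prime 11 isT u M); apply; rewrite h; lia.
  - move=> a b n h /=; apply: (@par1 3 a b n); rewrite -h; lia.
case/orP=> [/eqP ->|].
  exists 1, 5; split; [right; split; lia | lia | lia | split].
  - exact: small_1_5.
  - move=> u M h; have := (@hsq_prime 19 isT u M); apply; rewrite h; lia.
  - move=> a b n h /=; apply: (@par1 5 a b n); rewrite -h; lia.
case/orP=> [/eqP ->|].
  exists 1, 11; split; [right; split; lia | lia | lia | split].
  - exact: small_1_11.
  - move=> u M h; have := (@hsq_prime 43 isT u M); apply; rewrite h; lia.
  - move=> a b n h /=; apply: (@par1 11 a b n); rewrite -h; lia.
case/orP=> [/eqP ->|].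
  exists 1, 17; split; [right; split; lia | lia | lia | split].
  - exact: small_1_17.
  - move=> u M h; have := (@hsq_prime 67 isT u M); apply; rewrite h; lia.
  - move=> a b n h /=; apply: (@par1 17 a b n); rewrite -h; lia.
move/eqP ->.
  exists 1, 41; split; [right; split; lia | lia | lia | split].
  - exact: small_1_41.
  - move=> u M h; have := (@hsq_prime 163 isT u M); apply; rewrite h; lia.
  - move=> a b n h /=; apply: (@par1 41 a b n); rewrite -h; lia.
Qed.

Section Ring.
Variables (d t0 k : int).
Hypothesis hg : good d t0 k.
Let hr := @hrel d t0 k hg.
Let dn := @dneg d t0 k hg.

Lemma ht0 : t0 = 0 \/ t0 = 1.
Proof. by case: hr => [[-> _]|[-> _]]; [left|right]. Qed.
Lemma hk1 : 1 <= k.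
Proof. by case: hg. Qed.

Lemma QF_ge0 x y : 0 <= QF t0 k x y.
Proof.
have := ht0; have := hk1; rewrite /QF => h1 h2.
have h3 : 0 <= (2 * x + y) * (2 * x + y) by rewrite -expr2 sqr_ge0.
have h6 : 0 <= y * y by rewrite -expr2 sqr_ge0.
have h5 : 0 <= x * x by rewrite -expr2 sqr_ge0.
have h4 : 0 <= (k - 1) * (y * y) by apply: mulr_ge0 => //; lia.
case: h2 => ->; nia.
Qed.

Lemma inR_emb x y : inR d (emb d t0 x y).
Proof. by apply/(@inR_iff d t0 k hg _); exists x, y. Qed.

Lemma inR_add u v : inR d u -> inR d v -> inR d (u + v).
Proof.
move=> /(@inR_iff d t0 k hg _) [a1 [a2 ->]] /(@inR_iff d t0 k hg _) [b1 [b2 ->]].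
by rewrite emb_add; apply: inR_emb.
Qed.

Lemma inR_opp u : inR d u -> inR d (- u).
Proof. by move=> /(@inR_iff d t0 k hg _) [a1 [a2 ->]]; rewrite emb_opp; apply: inR_emb. Qed.

Lemma inR_sub u v : inR d u -> inR d v -> inR d (u - v).
Proof. by move=> hu hv; apply: inR_add => //; apply: inR_opp. Qed.

Lemma inR_mul u v : inR d u -> inR d v -> inR d (u * v).
Proof.
move=> /(@inR_iff d t0 k hg _) [a1 [a2 ->]] /(@inR_iff d t0 k hg _) [b1 [b2 ->]].
by rewrite (emb_mul _ _ _ hr); apply: inR_emb.
Qed.

Lemma inR_conj u : inR d u -> inR d u^*.
Proof. by move=> /(@inR_iff d t0 k hg _) [a1 [a2 ->]]; rewrite (@emb_conj d t0 k hr dn); apply: inR_emb. Qed.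

Lemma inR_int (n : int) : inR d n%:~R.
Proof. by rewrite -(emb_int d t0 n); apply: inR_emb. Qed.

Lemma inR0 : inR d 0.
Proof. exact: (inR_int 0). Qed.
Lemma inR1 : inR d 1.
Proof. exact: (inR_int 1). Qed.
Lemma inR_nat (n : nat) : inR d n%:R.
Proof. exact: (inR_int n). Qed.

Lemma norm_nat (u : algC) : inR d u -> exists n : nat, u * u^* = n%:R.
Proof.
move=> /(@inR_iff d t0 k hg _) [a1 [a2 ->]].
rewrite (@emb_norm d t0 k hr dn); exists `|QF t0 k a1 a2|%N.
have h := QF_ge0 a1 a2.
have -> : QF t0 k a1 a2 = Posz `|QF t0 k a1 a2|%N by lia.
by [].
Qed.

Lemma norm_eq0 (u : algC) : u * u^* = 0 -> u = 0.
Proof. by move/eqP; rewrite mulf_eq0 conjC_eq0 orbb => /eqP. Qed.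

Lemma emb_scale (c x y : int) : emb d t0 (c * x) (c * y) = c%:~R * emb d t0 x y.
Proof. by rewrite /emb !rmorphM /=; ring. Qed.

Lemma hsmall : forall p e q : int, 2 <= p -> 0 <= e -> e < p ->
       e * e + t0 * e + k = p * q -> 4 * k < 3 * p * p.
Proof. by case: hg => _ _ _ []. Qed.

Lemma DH_alg a b (n : nat) : inR d a -> inR d b -> a != 0 -> a * a^* = n%:R ->
  ~ dvdR d a b ->
  exists s t, inR d s /\ inR d t /\ exists m : nat, (0 < m)%N /\ (m < n)%N /\
    (s * b - t * a) * (s * b - t * a)^* = m%:R.
Proof.
move=> hRa hRb a0 hn nd.
move: (hRa) (hRb) => /(@inR_iff d t0 k hg _) [a1 [a2 ha]] /(@inR_iff d t0 k hg _) [b1 [b2 hb]].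
set x := b1 * (a1 + t0 * a2) - k * b2 * (- a2).
set y := b1 * (- a2) + b2 * (a1 + t0 * a2) + t0 * b2 * (- a2).
have hrho : b * a^* = emb d t0 x y.
  by rewrite ha hb (@emb_conj d t0 k hr dn) (emb_mul _ _ _ hr).
have n0 : (0 < n)%N.
  case: n hn => // hn; case/negP: a0; apply/eqP; exact: norm_eq0.
have ac0 : a^* != 0 by rewrite conjC_eq0.
have nd' : ~ (idv n%:Z x /\ idv n%:Z y).
  move=> [[x' hx] [y' hy]]; apply: nd; exists (emb d t0 x' y'); split; first exact: inR_emb.
  apply: (mulIf ac0); rewrite hrho hx hy emb_scale.
  have -> : ((n%:Z)%:~R : algC) = a * a^* by rewrite hn.
  by rewrite mulrAC.
have [s1 [s2 [t1 [t2 [h1 h2]]]]] := @DH_int t0 k ht0 hk1 hsmall n x y n0 nd'.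
exists (emb d t0 s1 s2), (emb d t0 t1 t2); split; first exact: inR_emb.
split; first exact: inR_emb.
set u := emb d t0 s1 s2 * b - emb d t0 t1 t2 * a.
have hRu : inR d u by apply: inR_sub; apply: inR_mul => //; apply: inR_emb.
have [m hm] := @norm_nat u hRu.
exists m; rewrite hm.
move: h1 h2.
set X := s1 * x - k * s2 * y - n%:Z * t1.
set Y := s1 * y + s2 * x + t0 * s2 * y - n%:Z * t2.
have hz : emb d t0 X Y = a^* * u.
  have -> : emb d t0 X Y = emb d t0 s1 s2 * emb d t0 x y - (n%:Z)%:~R * emb d t0 t1 t2.
    rewrite (emb_mul _ _ _ hr) -emb_scale emb_opp emb_add /X /Y; congr emb; ring.
  rewrite -hrho /u.
  have -> : (n%:Z)%:~R = a * a^* by rewrite hn.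
  ring.
have key : (QF t0 k X Y)%:~R = (n%:Z * m%:Z)%:~R :> algC.
  rewrite -(@emb_norm d t0 k hr dn) hz rmorphM /= conjCK rmorphM /=.
  transitivity ((a * a^*) * (u * u^*)); first ring.
  by rewrite hn hm.
move/intr_inj: key => ->.
move=> h1 h2; split; [|split] => //; nia.
Qed.

Lemma PID (A : algC -> Prop) : is_ideal d A -> nonzero_set A ->
  exists m, [/\ inR d m, m <> 0 & forall z, A z <-> dvdR d m z].
Proof.
move=> hA [a0 [Aa0 a0nz]].
case: hA => hAR hA0 hAadd hAopp hAmul.
have [n hn] := @norm_nat a0 (hAR _ Aa0).
elim: n {-2}n (leqnn n) a0 Aa0 a0nz hn => [|N IH] n hnN a Aa anz hn.
  by move: hnN hn; rewrite leqn0 => /eqP -> /norm_eq0.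
case: (classic (forall b, A b -> dvdR d a b)) => [hall|].
  exists a; split => //; first exact: hAR.
  move=> z; split; first exact: hall.
  by move=> [w [hw ->]]; rewrite mulrC; apply: hAmul.
move/not_all_ex_not => [b hb].
have [Ab ndv] := imply_to_and _ _ hb.
have [s [t [hs [ht [m [m0 [mn hm]]]]]]] :=
  @DH_alg a b n (hAR _ Aa) (hAR _ Ab) (introN eqP anz) hn ndv.
apply: (IH m _ (s * b - t * a)); last exact: hm.
- by move: mn hnN; lia.
- by apply: hAadd; [apply: hAmul | apply: hAopp; apply: hAmul].
- move=> h0; move: hm; rewrite h0 mul0r => /eqP; rewrite eq_sym pnatr_eq0.
  by move/eqP => h; move: m0; rewrite h.
Qed.

Lemma dvdR_trans u v w : dvdR d u v -> dvdR d v w -> dvdR d u w.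
Proof.
move=> [x [hx ->]] [y [hy ->]]; exists (x * y); split; first exact: inR_mul.
by rewrite mulrA.
Qed.

Lemma dvdR_refl u : dvdR d u u.
Proof. by exists 1; split; [exact: inR1 | rewrite mulr1]. Qed.

Lemma gcd_exists a m : inR d a -> inR d m -> m != 0 ->
  exists g, is_gcdR d g a m /\
    exists u v, [/\ inR d u, inR d v & g = u * a + v * m].
Proof.
move=> ha hm m0.
pose I z := exists u v, [/\ inR d u, inR d v & z = u * a + v * m].
have hI : is_ideal d I.
  split.
  - by move=> z [u [v [hu hv ->]]]; apply: inR_add; apply: inR_mul.
  - by exists 0, 0; split; [exact: inR0 | exact: inR0 | rewrite !mul0r addr0].
  - move=> x y [u [v [hu hv ->]]] [u' [v' [hu' hv' ->]]].
    exists (u + u'), (v + v'); split; [exact: inR_add | exact: inR_add | ring].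
  - move=> x [u [v [hu hv ->]]]; exists (- u), (- v).
    split; [exact: inR_opp | exact: inR_opp | ring].
  - move=> r x hr' [u [v [hu hv ->]]]; exists (r * u), (r * v).
    split; [exact: inR_mul | exact: inR_mul | ring].
have hnz : nonzero_set I.
  exists m; split; last by apply/eqP.
  by exists 0, 1; split; [exact: inR0 | exact: inR1 | rewrite mul0r add0r mul1r].
have [g [hg' g0 hgI]] := @PID I hI hnz.
have [u [v [hu hv hguv]]] : I g by apply/hgI; exact: dvdR_refl.
exists g; split; last by exists u, v.
split => //.
- apply/hgI; exists 1, 0; split; [exact: inR1 | exact: inR0 | ring].
- apply/hgI; exists 0, 1; split; [exact: inR0 | exact: inR1 | ring].
move=> c hc [a' [ha' ea]] [m' [hm' em]].
exists (u * a' + v * m'); split; first by apply: inR_add; apply: inR_mul.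
by rewrite hguv ea em; ring.
Qed.

Lemma gcd_bezout a m g : inR d a -> inR d m -> m != 0 -> is_gcdR d g a m ->
  exists u v, [/\ inR d u, inR d v & g = u * a + v * m].
Proof.
move=> ha hm m0 [hg' hga hgm hgc].
have [h [[hh hha hhm hhc] [u [v [hu hv huv]]]]] := @gcd_exists a m ha hm m0.
have [w [hw ->]] := hgc h hh hha hhm.
exists (u * w), (v * w); split; [exact: inR_mul | exact: inR_mul |].
by rewrite huv; ring.
Qed.

Lemma key_lemma a m g m1 : inR d a -> inR d m -> m != 0 -> is_gcdR d g a m ->
  inR d m1 -> m = g * m1 ->
  forall c, inR d c -> (dvdR d m (c * a) <-> dvdR d m1 c).
Proof.
move=> ha hm m0 hgcd hm1 hmg c hc.
have [u [v [hu hv huv]]] := @gcd_bezout a m g ha hm m0 hgcd.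
case: hgcd => hg' [a' [ha' hag]] _ _.
have g0 : g != 0 by apply: contraNneq m0 => g0; rewrite hmg g0 mul0r.
have h1 : 1 = u * a' + v * m1.
  apply: (mulfI g0); rewrite mulr1 [X in X = _]huv hag hmg; ring.
split.
  move=> [r [hr0 hcr]].
  exists (u * r + c * v); split; first by apply: inR_add; apply: inR_mul.
  have hca : c * a' = m1 * r.
    apply: (mulfI g0); rewrite -[m1 * r]/(m1 * r).
    transitivity (c * a); first by rewrite hag; ring.
    by rewrite hcr hmg; ring.
  transitivity (c * (u * a' + v * m1)); first by rewrite -h1 mulr1.
  transitivity (u * (c * a') + c * v * m1); first ring.
  by rewrite hca; ring.
move=> [r [hr0 ->]]; exists (r * a'); split; first exact: inR_mul.
by rewrite hmg hag; ring.
Qed.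

Lemma gcd_cofactor g a m : is_gcdR d g a m -> exists m1, inR d m1 /\ m = g * m1.
Proof. by case=> _ _ [m1 [h1 h2]] _; exists m1. Qed.

Lemma cancel_l (g x y : algC) : g * x != 0 -> g * x = g * y -> x = y.
Proof.
move=> h e; have g0 : g != 0 by apply: contraNneq h => ->; rewrite mul0r.
exact: (mulfI g0).
Qed.

Lemma P_principal (H : algC -> Prop) (m : algC) : inR d m -> m != 0 ->
  (forall z, inR d z -> (H z <-> dvdR d m z)) ->
  forall a b, inR d a -> inR d b -> (P_rel d H a b <-> tau_rel d m a b).
Proof.
move=> hm m0 hH a b ha hb.
have stepA : P_rel d H a b <->
    (forall c, inR d c -> (dvdR d m (c * a) <-> dvdR d m (c * b))).
  split.
    move=> hP c hc; have h := hP c 1 hc inR1; rewrite !mulr1 in h.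
    have hca := @inR_mul _ _ hc ha; have hcb := @inR_mul _ _ hc hb.
    split => hx.
      by apply/(hH _ hcb); apply/h; apply/(hH _ hca).
    by apply/(hH _ hca); apply/h; apply/(hH _ hcb).
  move=> hc x y hx hy.
  rewrite [x * a * y]mulrAC [x * b * y]mulrAC.
  have hxy := @inR_mul _ _ hx hy.
  have hxya := @inR_mul _ _ hxy ha; have hxyb := @inR_mul _ _ hxy hb.
  split => h1.
    by apply/(hH _ hxyb); apply/(hc _ hxy); apply/(hH _ hxya).
  by apply/(hH _ hxya); apply/(hc _ hxy); apply/(hH _ hxyb).
rewrite stepA; split.
  move=> hc.
  have [g1 [hg1 _]] := @gcd_exists a m ha hm m0.
  have [g2 [hg2 _]] := @gcd_exists b m hb hm m0.
  have [m1 [hm1 e1]] := @gcd_cofactor _ _ _ hg1.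
  have [m2 [hm2 e2]] := @gcd_cofactor _ _ _ hg2.
  have k1 := @key_lemma a m g1 m1 ha hm m0 hg1 hm1 e1.
  have k2 := @key_lemma b m g2 m2 hb hm m0 hg2 hm2 e2.
  have hmm : forall c, inR d c -> (dvdR d m1 c <-> dvdR d m2 c).
    move=> c hc'; rewrite -(k1 c hc') -(k2 c hc'); exact: hc.
  have [w [hw ew]] : dvdR d m1 m2 by apply/(hmm _ hm2); exact: dvdR_refl.
  have [w' [hw' ew']] : dvdR d m2 m1 by apply/(hmm _ hm1); exact: dvdR_refl.
  have m0' : m != 0 := m0.
  exists g1, g2; split => //; split.
    exists w'; split => //.
    apply: (@cancel_l m2); first by rewrite mulrC -e2.
    by rewrite [m2 * g2]mulrC -e2 e1 ew'; ring.
  exists w; split => //.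
  apply: (@cancel_l m1); first by rewrite mulrC -e1.
  by rewrite [m1 * g1]mulrC -e1 e2 ew; ring.
move=> [g1 [g2 [hg1 hg2 [[w [hw ew]] [w' [hw' ew']]]]]].
have [m1 [hm1 e1]] := @gcd_cofactor _ _ _ hg1.
have [m2 [hm2 e2]] := @gcd_cofactor _ _ _ hg2.
have k1 := @key_lemma a m g1 m1 ha hm m0 hg1 hm1 e1.
have k2 := @key_lemma b m g2 m2 hb hm m0 hg2 hm2 e2.
have d21 : dvdR d m2 m1.
  exists w; split => //; apply: (@cancel_l g1); first by rewrite -e1.
  by rewrite -e1 e2 ew; ring.
have d12 : dvdR d m1 m2.
  exists w'; split => //; apply: (@cancel_l g2); first by rewrite -e2.
  by rewrite -e2 e1 ew'; ring.
move=> c hc; rewrite (k1 c hc) (k2 c hc); split => h.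
  exact: dvdR_trans d21 h.
exact: dvdR_trans d12 h.
Qed.
End Ring.

Theorem theorem7 (d : int) (hd : d \in heegner_d) (A : algC -> Prop)
    (hA : is_ideal d A) (hA0 : nonzero_set A) :
  (exists m : algC, [/\ inR d m, m <> 0 &
     forall a b, inR d a -> inR d b -> (P_rel d A a b <-> tau_rel d m a b)]) /\
  (exists n : nat, (0 < n)%N /\
     forall a b, inR d a -> inR d b ->
       (P_rel d (prod_set A (conj_set A)) a b <-> tau_rel d n%:R a b)).
Proof.
have [t0 [k hg]] := @good_heegner d hd.
have [m [hm m0 hAm]] := @PID d t0 k hg A hA hA0.
have m0' : m != 0 by apply/eqP.
split.
  exists m; split => //.
  by apply: (@P_principal d t0 k hg A m hm m0') => z _; exact: hAm.
have [n hn] := @norm_nat d t0 k hg m hm.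
have n0 : (0 < n)%N.
  case: n hn => // /(@norm_eq0 m) h; by case/eqP: m0'.
exists n; split => //.
apply: (@P_principal d t0 k hg _ n%:R (@inR_nat d t0 k hg n)).
  by rewrite pnatr_eq0 -lt0n.
move=> z hz; split.
  move=> [s [hs ->]].
  elim: s hs => [|[p1 p2] s IH] hs.
    by rewrite big_nil; exists 0; split; [exact: (@inR0 d t0 k hg) | rewrite mulr0].
  rewrite big_cons /=.
  have [hp1 hp2] := hs (p1, p2) (mem_head _ _).
  have [w3 [hw3 e3]] : dvdR d n%:R (\sum_(p <- s) p.1 * p.2).
    by apply: IH => p hp; apply: hs; rewrite in_cons hp orbT.
  have [w1 [hw1 e1]] := (hAm p1).1 hp1.
  have [w2 [hw2 e2]] := (hAm (p2^*)).1 hp2.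
  have e2' : p2 = m^* * w2^* by rewrite -[p2]conjCK e2 rmorphM.
  exists (w1 * w2^* + w3); split.
    apply: (@inR_add d t0 k hg) => //; apply: (@inR_mul d t0 k hg) => //.
    exact: (@inR_conj d t0 k hg).
  by rewrite e3 e1 e2' -hn; ring.
move=> [w [hw ->]].
exists [:: (m, m^* * w)]; split.
  move=> p; rewrite inE => /eqP -> /=; split.
    by apply/hAm; exact: (@dvdR_refl d t0 k hg).
  rewrite /conj_set; apply/hAm; exists w^*; split.
    exact: (@inR_conj d t0 k hg).
  by rewrite rmorphM /= conjCK.
by rewrite big_cons big_nil /= addr0 -hn mulrA.
Qed.
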